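(* Let $\mathbb{X}^0,\mathbb{X}^1$ be $0$-dimensional Polish spaces and $\mathbb{A}^0,\mathbb{A}^1$ disjoint subsets of $\mathbb{X}^0\times\mathbb{X}^1$. The following are equivalent: (a) for all Polish spaces $X,Y$ and all disjoint $A_0,A_1\subseteq X\times Y$, if no countable union of rectangles $U\times V$ ($U$ open in $X$, $V$ open in $Y$) contains $A_0$ and is disjoint from $A_1$, then there are continuous $f:\mathbb{X}^0\to X$, $g:\mathbb{X}^1\to Y$ with $(f\times g)(\mathbb{A}^0)\subseteq A_0$ and $(f\times g)(\mathbb{A}^1)\subseteq A_1$; (b) for each $\varepsilon\in2$ there is a sequence $(C^\varepsilon_i)_{i\in\omega}$ of pairwise disjoint clopen subsets of $\mathbb{X}^\varepsilon$ such that $\mathbb{A}^1\subseteq\bigcup_{i\in\omega}C^0_i\times C^1_i$ and $\mathbb{A}^0\subseteq\big(\mathbb{X}^0\setminus\bigcup_{i}C^0_i\big)\times\big(\mathbb{X}^1\setminus\bigcup_iC^1_i\big)$.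
   Context: $(f\times g)(x,y)=(f(x),g(y))$. *)

(* Defs.v *)
From Stdlib Require Import Reals.
From mathcomp Require Import all_boot all_order.
From mathcomp Require Import all_classical.
From mathcomp Require Import topology.

Set Implicit Arguments. Unset Strict Implicit. Unset Printing Implicit Defensive.
Local Open Scope classical_set_scope.

Definition polish (T : topologicalType) : Prop :=
  exists d : T -> T -> R,
    (forall x y, Rle R0 (d x y)) /\
    (forall x y, d x y = R0 <-> x = y) /\
    (forall x y, d x y = d y x) /\
    (forall x y z, Rle (d x z) (Rplus (d x y) (d y z))) /\
    (forall U : set T, open U <->
       (forall x, U x -> exists e, Rlt R0 e /\ forall y, Rlt (d x y) e -> U y)) /\
    (forall u : nat -> T,
       (forall e, Rlt R0 e -> exists N, forall m n, (N <= m)%N -> (N <= n)%N ->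
          Rlt (d (u m) (u n)) e) ->
       exists x, forall e, Rlt R0 e -> exists N, forall n, (N <= n)%N ->
          Rlt (d (u n) x) e) /\
    (exists D : set T, countable D /\
       forall x e, Rlt R0 e -> exists y, D y /\ Rlt (d x y) e).

Definition zero_dim (T : topologicalType) : Prop :=
  forall (U : set T) (x : T), open U -> U x ->
    exists V : set T, [/\ clopen V, V x & V `<=` U].

(* Main.v *)
Require Import Defs.
From Stdlib Require Import Reals.
From mathcomp Require Import all_boot all_order.
From mathcomp Require Import all_classical.
From mathcomp Require Import topology.

From HB Require Import structures.
From Stdlib Require Import Lra Lia.
Local Open Scope classical_set_scope.
Definition om1 := option nat.
HB.instance Definition _ := Choice.on om1.

Definition hh (x : om1) : R := match x with None => R0 | Some n => Rinv (INR n.+1) end.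
Definition dd (x y : om1) : R := if x == y then R0 else Rmax (hh x) (hh y).

Lemma hh_ge0 x : Rle R0 (hh x).
Proof. case: x => [n|] /=; last lra. apply: Rlt_le; apply: Rinv_0_lt_compat. exact: (lt_0_INR _ (Nat.lt_0_succ n)). Qed.
Lemma hh_gt0 n : Rlt R0 (hh (Some n)).
Proof. apply: Rinv_0_lt_compat. exact: (lt_0_INR _ (Nat.lt_0_succ n)). Qed.

Definition mop (U : set om1) : Prop :=
  forall x, U x -> exists e, Rlt R0 e /\ forall y, Rlt (dd x y) e -> U y.

Lemma mopT : mop setT.
Proof. move=> x _; exists R1; split; [lra|done]. Qed.
Lemma mopI : setI_closed mop.
Proof.
move=> A B hA hB x [Ax Bx].
have [e1 [e1p H1]] := hA x Ax; have [e2 [e2p H2]] := hB x Bx.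
exists (Rmin e1 e2); split; first by apply: Rmin_pos.
move=> y hy; split; [apply: H1 | apply: H2];
  have := Rmin_l e1 e2; have := Rmin_r e1 e2; lra.
Qed.
Lemma mop_bigU (I : Type) (f : I -> set om1) : (forall i, mop (f i)) -> mop (\bigcup_i f i).
Proof.
move=> hf x [i _ fxi]. have [e [ep H]] := hf i x fxi.
exists e; split=> // y hy; exists i => //; exact: H.
Qed.
HB.instance Definition _ := isOpenTopological.Build om1 mopT mopI mop_bigU.

Lemma om_openE (U : set om1) : open U <-> mop U.
Proof. done. Qed.

Lemma arch (e : R) : Rlt R0 e -> exists N : nat, forall n, (N <= n)%N -> Rlt (Rinv (INR n.+1)) e.
Proof.
move=> ep; have [N [hN N0]] := archimed_cor1 e ep.
exists N => n /leP Nn.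
have hN0 : Rlt R0 (INR N) by apply: lt_0_INR.
apply: Rle_lt_trans hN; apply: Rinv_le_contravar => //.
apply: le_INR; lia.
Qed.

Lemma dd_ge0 x y : Rle R0 (dd x y).
Proof. rewrite /dd; case: eqP => _; first lra. have := hh_ge0 x; have := Rmax_l (hh x) (hh y); lra. Qed.

Lemma dd_ne x y : x <> y -> Rle (hh x) (dd x y) /\ Rle (hh y) (dd x y).
Proof. rewrite /dd; case: eqP => // _ _; split; [exact: Rmax_l | exact: Rmax_r]. Qed.

Lemma dd_xx x : dd x x = R0.
Proof. by rewrite /dd eqxx. Qed.

Lemma dd0 x y : dd x y = R0 <-> x = y.
Proof.
split; last by move=> ->; rewrite dd_xx.
move=> h; apply: contrapT => nxy; have [h1 h2] := dd_ne _ _ nxy; rewrite h in h1 h2; clear h.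
case: x nxy h1 h2 => [n|] nxy h1 h2; first (have := hh_gt0 n; lra).
case: y nxy h1 h2 => [m|] nxy h1 h2; last done. have := hh_gt0 m; lra.
Qed.

Lemma ddC x y : dd x y = dd y x.
Proof. rewrite /dd eq_sym; case: eqP => // _; exact: Rmax_comm. Qed.

Lemma dd_tri x y z : Rle (dd x z) (Rplus (dd x y) (dd y z)).
Proof.
have := dd_ge0 x y; have := dd_ge0 y z.
have [->|nxz] := eqVneq x z; first by rewrite dd_xx; lra.
have [exy|nxy] := eqVneq x y; first by rewrite exy dd_xx; lra.
have [eyz|nyz] := eqVneq y z; first by rewrite eyz dd_xx; lra.
have nxy' : x <> y by apply/eqP.
have nyz' : y <> z by apply/eqP.
have [h1 _] := dd_ne _ _ nxy'; have [_ h2] := dd_ne _ _ nyz'.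
have -> : dd x z = Rmax (hh x) (hh z) by rewrite /dd (negbTE nxz).
move=> g1 g2; apply: Rmax_lub; lra.
Qed.

Lemma om_polish : polish om1.
Proof.
exists dd; split; first exact: dd_ge0.
split; first exact: dd0.
split; first exact: ddC.
split; first exact: dd_tri.
split; first by move=> U; exact: om_openE.
split.
  move=> u hc.
  case: (pselect (exists N c, forall n, (N <= n)%N -> u n = c)).
    move=> [N [c hN]]; exists c => e ep; exists N => n Nn; by rewrite hN // dd_xx.
  move=> nonconst; exists None => e ep.
  have [N hN] := hc e ep; exists N => n Nn.
  case en: (u n) => [k|]; last by rewrite dd_xx.
  have [m [Nm um]] : exists m, (N <= m)%N /\ u m <> u n.
    apply: contrapT => H; apply: nonconst; exists N, (u n) => m Nm.
    apply: contrapT => hm; apply: H; by exists m.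
  have := hN n m Nn Nm. have [h _] := dd_ne (u n) (u m) (nesym um).
  rewrite en in h *. move=> h'. have -> : dd (Some k) None = Rmax (hh (Some k)) (hh None) by [].
  apply: Rmax_lub_lt; [lra | simpl; lra].
exists setT; split.
  apply/countable_injP; exists pickle => a b _ _; exact: (pcan_inj pickleK).
move=> x e ep; exists x; split => //; by rewrite dd_xx.
Qed.

Lemma dd_small x y : Rlt (dd x y) (hh x) -> y = x.
Proof.
move=> h; apply: contrapT => nyx; have [h1 _] := dd_ne x y (nesym nyx); lra.
Qed.

Lemma om_open1 i : open [set Some i : om1].
Proof.
apply/om_openE => x -> /=; exists (hh (Some i)); split; first exact: hh_gt0.
by move=> y /dd_small ->.
Qed.

Lemma om_openC1 i : open (~` [set Some i : om1]).
Proof.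
apply/om_openE => x /= nx; case: x nx => [k|] nx.
  exists (hh (Some k)); split; first exact: hh_gt0.
  by move=> y /dd_small ->.
exists (hh (Some i)); split; first exact: hh_gt0.
move=> y hy ey; rewrite ey in hy.
have [_ h2] := dd_ne None (Some i) (fun e => ltac:(discriminate e)); lra.
Qed.

Lemma open_loc (T : topologicalType) (P : set T) :
  (forall x, P x -> exists B, open B /\ B x /\ B `<=` P) -> open P.
Proof.
move=> h; rewrite openE => x Px; have [B [oB [Bx BP]]] := h x Px.
rewrite /interior; apply: (filterS BP); apply: open_nbhs_nbhs; by split.
Qed.

Lemma clopen_pre (T : topologicalType) (f : T -> om1) (i : nat) :
  continuous f -> clopen (f @^-1` [set Some i]).
Proof.
move=> /continuousP cf; split; first exact: cf (om_open1 i).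
rewrite -[[set Some i]]setCK -preimage_setC; apply: open_closedC; exact: cf (om_openC1 i).
Qed.

Lemma dirAB (X0 X1 : topologicalType) (AA0 AA1 : set (X0 * X1)) :
  (forall (X Y : topologicalType), polish X -> polish Y ->
     forall A0 A1 : set (X * Y), A0 `&` A1 = set0 ->
     ~ (exists (U : nat -> set X) (V : nat -> set Y),
          (forall i, open (U i) /\ open (V i)) /\
          A0 `<=` \bigcup_i (U i `*` V i) /\
          (\bigcup_i (U i `*` V i)) `&` A1 = set0) ->
     exists (f : X0 -> X) (g : X1 -> Y),
       continuous f /\ continuous g /\
       (forall x y, AA0 (x, y) -> A0 (f x, g y)) /\
       (forall x y, AA1 (x, y) -> A1 (f x, g y))) ->
  (exists (C0 : nat -> set X0) (C1 : nat -> set X1),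
     (forall i, clopen (C0 i)) /\ (forall i, clopen (C1 i)) /\
     (forall i j, i <> j -> C0 i `&` C0 j = set0) /\
     (forall i j, i <> j -> C1 i `&` C1 j = set0) /\
     AA1 `<=` \bigcup_i (C0 i `*` C1 i) /\
     AA0 `<=` (~` \bigcup_i C0 i) `*` (~` \bigcup_i C1 i)).
Proof.
move=> ha.
have := ha om1 om1 om_polish om_polish [set (None, None)]
  [set p | exists n, p = (Some n, Some n)].
case.
- rewrite -subset0 => p [/= -> [n]] //.
- move=> [U [V [oUV [cov dis]]]].
  have [i _ [/= Ui Vi]] := cov (None, None) erefl.
  have [oU oV] := oUV i.
  have [e1 [e1p h1]] := (proj1 (om_openE _) oU) None Ui.
  have [e2 [e2p h2]] := (proj1 (om_openE _) oV) None Vi.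
  have [N hN] := arch (Rmin e1 e2) (Rmin_pos _ _ e1p e2p).
  have hN' := hN N (leqnn N).
  have hd : dd None (Some N) = Rmax (hh None) (hh (Some N)) by [].
  have hm : Rlt (dd None (Some N)) (Rmin e1 e2).
    rewrite hd; apply: Rmax_lub_lt; first by have := Rmin_pos _ _ e1p e2p; simpl; lra.
    exact: hN'.
  have : (\bigcup_i (U i `*` V i) `&` [set p | exists n, p = (Some n, Some n)]) (Some N, Some N).
    split; last by exists N.
    exists i => //; split; [apply: h1; apply: (Rlt_le_trans _ _ _ hm); apply: Rmin_l | apply: h2; apply: (Rlt_le_trans _ _ _ hm); apply: Rmin_r].
  by rewrite dis.
move=> f [g [cf [cg [h0 h1]]]].
exists (fun i => f @^-1` [set Some i]), (fun i => g @^-1` [set Some i]).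
split; first by move=> i; exact: clopen_pre.
split; first by move=> i; exact: clopen_pre.
split. move=> i j ij; rewrite -subset0 => x [/= -> ]; case=> e; exact: ij.
split. move=> i j ij; rewrite -subset0 => x [/= -> ]; case=> e; exact: ij.
split.
  move=> [x y] /= /h1 [n [fx gy]]; exists n => //.
move=> [x y] /= /h0 [fx gy]; split => /= -[i _] /=; [rewrite fx | rewrite gy] => //.
Qed.

Lemma build_map (X0 X : topologicalType) (C : nat -> set X0)
  (hC : forall i, clopen (C i)) (hdis : forall i j, i <> j -> C i `&` C j = set0)
  (a : X) (an : nat -> X)
  (hconv : forall W, open W -> W a -> exists N, forall n, (N <= n)%N -> W (an n)) :
  exists f : X0 -> X, continuous f /\ (forall i x, C i x -> f x = an i) /\
    (forall x, ~ (\bigcup_i C i) x -> f x = a).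
Proof.
pose f x := match pselect (exists i, C i x) with
  | left h => an (projT1 (cid h)) | right _ => a end.
have fC : forall i x, C i x -> f x = an i.
  move=> i x Cx; rewrite /f; case: pselect => [h|h]; last by exfalso; apply: h; exists i.
  case: (cid h) => j Cj /=; have [->//|ij] := eqVneq j i.
  have : (C j `&` C i) x by [].
  rewrite hdis; [by [] | exact/eqP].
have fN : forall x, ~ (\bigcup_i C i) x -> f x = a.
  move=> x nx; rewrite /f; case: pselect => [[i Ci]|//]; exfalso; apply: nx; by exists i.
exists f; split=> //; apply/continuousP => W oW.
apply: open_loc => x /= Wfx.
case: (pselect (exists i, C i x)) => [[i Ci]|nC].
  exists (C i); split; first exact: (hC i).1.
  split=> // z Cz /=; by rewrite (fC i z Cz) -(fC i x Ci).
have fxa : f x = a by apply: fN => -[i _ Ci]; apply: nC; exists i.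
rewrite fxa in Wfx; have [N hN] := hconv W oW Wfx.
pose B (M : nat) := [set z | forall i, (i < M)%N -> ~ C i z].
have oB : forall M, open (B M).
  elim=> [|M IH].
    have -> : B 0 = setT by apply/seteqP; split => z //= _ i.
    exact: openT.
  have -> : B M.+1 = B M `&` ~` C M.
    apply/seteqP; split => z /=.
      move=> h; split; [move=> i iM; apply: h; exact: ltnW | apply: h; exact: ltnSn].
    move=> [h1 h2] i; rewrite ltnS leq_eqVlt => /orP [/eqP ->//|]; exact: h1.
  apply: openI => //; rewrite openC; exact: (hC M).2.
exists (B N); split; first exact: oB.
split; first by move=> i _ Ci; apply: nC; exists i.
move=> z Bz /=.
case: (pselect (exists i, C i z)) => [[i Ci]|nz].
  rewrite (fC i z Ci); apply: hN; rewrite leqNgt; apply/negP => iN; exact: Bz i iN Ci.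
by rewrite fN // => -[i _ Ci]; apply: nz; exists i.
Qed.

Lemma ball_open (T : Type) (d : T -> T -> R)
  (dtri : forall x y z, Rle (d x z) (Rplus (d x y) (d y z)))
  (P : T -> Prop) (r : R) :
  forall x, (exists p, P p /\ Rlt (d p x) r) ->
  exists e, Rlt R0 e /\ forall y, Rlt (d x y) e -> exists p, P p /\ Rlt (d p y) r.
Proof.
move=> x [p [Pp hp]]; exists (Rminus r (d p x)); split; first lra.
move=> y hy; exists p; split=> //; have := dtri p x y; lra.
Qed.

Lemma key (X Y : topologicalType) (hX : polish X) (hY : polish Y)
  (A0 A1 : set (X * Y)) :
  ~ (exists (U : nat -> set X) (V : nat -> set Y),
          (forall i, open (U i) /\ open (V i)) /\
          A0 `<=` \bigcup_i (U i `*` V i) /\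
          (\bigcup_i (U i `*` V i)) `&` A1 = set0) ->
  exists a b (an : nat -> X) (bn : nat -> Y), A0 (a, b) /\ (forall n, A1 (an n, bn n)) /\
    (forall W, open W -> W a -> exists N, forall n, (N <= n)%N -> W (an n)) /\
    (forall W, open W -> W b -> exists N, forall n, (N <= n)%N -> W (bn n)).
Proof.
move=> hns.
have [dX [dX0 [dXeq [dXC [dXtri [dXop [_ [DX [cDX dDX]]]]]]]]] := hX.
have [dY [dY0 [dYeq [dYC [dYtri [dYop [_ [DY [cDY dDY]]]]]]]]] := hY.
have [cX icX] := countable_injP _ cDX.
have [cY icY] := countable_injP _ cDY.
pose r (m : nat) := Rinv (INR m.+1).
have rp : forall m, Rlt R0 (r m) by move=> m; exact: (hh_gt0 m).
pose BX k m := [set x | exists p, (DX p /\ cX p = k) /\ Rlt (dX p x) (r m)].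
pose BY k m := [set y | exists p, (DY p /\ cY p = k) /\ Rlt (dY p y) (r m)].
pose dec (n : nat) : (nat * nat) * (nat * nat) := odflt ((0,0),(0,0))%N (unpickle n).
pose cond n := (BX (dec n).1.1 (dec n).1.2 `*` BY (dec n).2.1 (dec n).2.2) `&` A1 = set0.
pose U n := [set x | cond n /\ BX (dec n).1.1 (dec n).1.2 x].
pose V n := [set y | cond n /\ BY (dec n).2.1 (dec n).2.2 y].
have good : exists a b, A0 (a, b) /\ forall e, Rlt R0 e ->
    exists x y, A1 (x, y) /\ Rlt (dX a x) e /\ Rlt (dY b y) e.
  apply: contrapT => H; apply: hns; exists U, V; split.
    move=> n; split.
      apply/dXop => x [cn bx]; have [e [ep he]] := ball_open _ _ dXtri (fun p => DX p /\ cX p = (dec n).1.1) (r (dec n).1.2) x bx.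
      by exists e; split=> // y /he.
    apply/dYop => x [cn bx]; have [e [ep he]] := ball_open _ _ dYtri (fun p => DY p /\ cY p = (dec n).2.1) (r (dec n).2.2) x bx.
    by exists e; split=> // y /he.
  split; last first.
    rewrite -subset0 => -[x y] [[n _ [/= [cn bx] [_ bY]]] A1xy].
    have : (BX (dec n).1.1 (dec n).1.2 `*` BY (dec n).2.1 (dec n).2.2 `&` A1) (x, y) by [].
    by rewrite cn.
  move=> [a b] A0ab.
  have [e [ep he]] : exists e, Rlt R0 e /\ forall x y, A1 (x, y) -> Rlt (dX a x) e -> Rlt (dY b y) e -> False.
    apply: contrapT => ne; apply: H; exists a, b; split=> // e ep.
    apply: contrapT => ne2; apply: ne; exists e; split=> // x y h1 h2 h3; apply: ne2; by exists x, y.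
  have [N hN] := arch (Rmult e (Rinv 2)) ltac:(lra).
  have hN' := hN N (leqnn N). rewrite -/(r N) in hN'.
  have [p [DXp dp]] := dDX a (r N) (rp N).
  have [q [DYq dq]] := dDY b (r N) (rp N).
  pose n := pickle ((cX p, N), (cY q, N)).
  have decn : dec n = ((cX p, N), (cY q, N)) by rewrite /dec /n pickleK.
  have cn : cond n.
    rewrite /cond decn /= -subset0 => -[x y] [[/= [p' [[DXp' cp'] hx]] [q' [[DYq' cq'] hy]]] A1xy].
    have ep' : p' = p by apply: icX => //; rewrite in_setE.
    have eq' : q' = q by apply: icY => //; rewrite in_setE.
    subst p' q'.
    apply: (he x y A1xy).
      have := dXtri a p x; lra.
    have := dYtri b q y; lra.
  exists n => //; split; split=> //; rewrite decn /=.
    exists p; split=> //; rewrite dXC; exact: dp.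
  exists q; split=> //; rewrite dYC; exact: dq.
have [a [b [A0ab hab]]] := good.
have [s hs] := choice (fun n => hab (r n) (rp n)).
have [t ht] := choice hs.
exists a, b, s, t; split=> //; split; first by move=> n; case: (ht n).
split.
  move=> W oW Wa; have [e [ep he]] := (proj1 (dXop W) oW) a Wa.
  have [N hN] := arch e ep; exists N => n Nn; apply: he.
  case: (ht n) => _ [h _]; have := hN n Nn; rewrite -/(r n); lra.
move=> W oW Wb; have [e [ep he]] := (proj1 (dYop W) oW) b Wb.
have [N hN] := arch e ep; exists N => n Nn; apply: he.
case: (ht n) => _ [_ h]; have := hN n Nn; rewrite -/(r n); lra.
Qed.

Theorem proposition3p9 (X0 X1 : topologicalType)
  (hX0 : polish X0) (hX1 : polish X1) (zX0 : zero_dim X0) (zX1 : zero_dim X1)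
  (AA0 AA1 : set (X0 * X1)) (hAA : AA0 `&` AA1 = set0) :
  (forall (X Y : topologicalType), polish X -> polish Y ->
     forall A0 A1 : set (X * Y), A0 `&` A1 = set0 ->
     ~ (exists (U : nat -> set X) (V : nat -> set Y),
          (forall i, open (U i) /\ open (V i)) /\
          A0 `<=` \bigcup_i (U i `*` V i) /\
          (\bigcup_i (U i `*` V i)) `&` A1 = set0) ->
     exists (f : X0 -> X) (g : X1 -> Y),
       continuous f /\ continuous g /\
       (forall x y, AA0 (x, y) -> A0 (f x, g y)) /\
       (forall x y, AA1 (x, y) -> A1 (f x, g y)))
  <->
  (exists (C0 : nat -> set X0) (C1 : nat -> set X1),
     (forall i, clopen (C0 i)) /\ (forall i, clopen (C1 i)) /\
     (forall i j, i <> j -> C0 i `&` C0 j = set0) /\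
     (forall i j, i <> j -> C1 i `&` C1 j = set0) /\
     AA1 `<=` \bigcup_i (C0 i `*` C1 i) /\
     AA0 `<=` (~` \bigcup_i C0 i) `*` (~` \bigcup_i C1 i)).
Proof.
split; first exact: dirAB.
move=> [C0 [C1 [hC0 [hC1 [d0 [d1 [cov1 cov0]]]]]]] X Y hX hY A0 A1 hA hns.
have [a [b [an [bn [A0ab [A1n [ca cb]]]]]]] := key X Y hX hY A0 A1 hns.
have [f [cf [f1 f2]]] := build_map X0 X C0 hC0 d0 a an ca.
have [g [cg [g1 g2]]] := build_map X1 Y C1 hC1 d1 b bn cb.
exists f, g; split=> //; split=> //; split.
  move=> x y /cov0 [/= nx ny]; by rewrite f2 // g2.
move=> x y /cov1 [i _ [/= c0 c1]]; rewrite (f1 i x c0) (g1 i y c1); exact: A1n.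
Qed.
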